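(* There exists an online Fisher market instance (a number of goods $m$, a per-user capacity vector $\mathbf{d}>\mathbf{0}$ with capacities $\mathbf{c}=n\mathbf{d}$, and a distribution $\mathcal{D}$ of budget–utility pairs) such that, for every static pricing algorithm $\boldsymbol{\pi}$ (i.e., one that posts the same price vector $\mathbf{p}^t=\mathbf{p}$ to all users $t\in[n]$), either the expected regret $R_n(\boldsymbol{\pi})$ or the expected constraint violation $V_n(\boldsymbol{\pi})$ is $\Omega(\sqrt{n})$, where $n$ is the number of arriving users.
   Context: Online Fisher market: there are $m$ divisible goods, good $j$ having capacity $c_j=nd_j$ with $d_j>0$, and $n$ users arriving sequentially. User $t$ has a budget $w_t>0$ and a utility vector $\mathbf{u}_t\in\mathbb{R}^m_{\ge 0}$, and the pairs $(w_t,\mathbf{u}_t)$ are drawn i.i.d. from a distribution $\mathcal{D}$ with bounded support. Given a posted price vector $\mathbf{p}^t$, user $t$ consumes a bundle $\mathbf{x}_t$ that is an optimal solution of $\max_{\mathbf{x}\in\mathbb{R}^m}\ \mathbf{u}_t^\top\mathbf{x}$ subject to $(\mathbf{p}^t)^\top\mathbf{x}\le w_t$, $\mathbf{x}\ge\mathbf{0}$. A pricing policy $\boldsymbol{\pi}$ chooses $\mathbf{p}^t$ for each user. The offline optimum is $U_n^*=\max\{\sum_{t=1}^n w_t\log(\sum_{j}u_{tj}x_{tj}) : \sum_{t}x_{tj}\le c_j\ \forall j,\ x_{tj}\ge 0\}$ (Eisenberg–Gale program), the online objective is $U_n(\boldsymbol{\pi})=\sum_{t=1}^n w_t\log(\mathbf{u}_t^\top\mathbf{x}_t)$,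 the expected regret is $R_n(\boldsymbol{\pi})=\mathbb{E}[U_n^*-U_n(\boldsymbol{\pi})]$ and the expected constraint violation is $V_n(\boldsymbol{\pi})=\mathbb{E}[\|(\sum_{t=1}^n\mathbf{x}_t-\mathbf{c})_+\|_2]$, expectations over $\mathcal{D}$. Asymptotic notation refers to $n\to\infty$ with the instance parameters $m,\mathbf{d},\mathcal{D}$ fixed. *)

(* Defs.v *)
From HB Require Import structures.
From mathcomp Require Import all_boot all_order all_algebra.
From mathcomp Require Import all_classical all_reals all_analysis.
Set Implicit Arguments. Unset Strict Implicit. Unset Printing Implicit Defensive.
Import Order.TTheory GRing.Theory Num.Theory.
Local Open Scope ring_scope.
Local Open Scope classical_set_scope.

Section FisherDefs.
Variable R : realType.

Definition optimal_bundle (m : nat) (p : 'I_m -> R) (w : R) (u : 'I_m -> R)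
  (x : 'I_m -> R) : Prop :=
  (forall j, 0 <= x j) /\ \sum_j p j * x j <= w /\
  (forall y : 'I_m -> R, (forall j, 0 <= y j) -> \sum_j p j * y j <= w ->
     \sum_j u j * y j <= \sum_j u j * x j).

Definition EG_opt (m n : nat) (d : 'I_m -> R) (wt : 'I_n -> R)
  (ut : 'I_n -> 'I_m -> R) : R :=
  sup [set v : R | exists X : 'I_n -> 'I_m -> R,
     (forall t j, 0 <= X t j) /\
     (forall j, \sum_t X t j <= n%:R * d j) /\
     (forall t, 0 < \sum_j ut t j * X t j) /\
     v = \sum_t wt t * ln (\sum_j ut t j * X t j)].

Definition iid_expect (K : finType) (prob : K -> R) (n : nat)
  (f : {ffun 'I_n -> K} -> R) : R :=
  \sum_(s : {ffun 'I_n -> K}) (\prod_t prob (s t)) * f s.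

(* Expected regret R_n of the policy posting price p to all n users, where
   user t of type k consumes the bundle x t k. *)
Definition exp_regret (m : nat) (d : 'I_m -> R) (K : finType) (prob : K -> R)
  (w : K -> R) (u : K -> 'I_m -> R) (n : nat) (x : 'I_n -> K -> 'I_m -> R) : R :=
  iid_expect prob (fun s =>
    EG_opt d (fun t => w (s t)) (fun t => u (s t)) -
    \sum_t w (s t) * ln (\sum_j u (s t) j * x t (s t) j)).

Definition exp_violation (m : nat) (d : 'I_m -> R) (K : finType) (prob : K -> R)
  (n : nat) (x : 'I_n -> K -> 'I_m -> R) : R :=
  iid_expect prob (fun s =>
    Num.sqrt (\sum_j (Num.max 0 (\sum_t x t (s t) j - n%:R * d j)) ^+ 2)).

End FisherDefs.

(* Main.v *)
Require Import Defs.
From HB Require Import structures.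
From mathcomp Require Import all_boot all_order all_algebra.
From mathcomp Require Import all_classical all_reals all_analysis.
From mathcomp Require Import ring lra.
Import Order.TTheory GRing.Theory Num.Theory.
Local Open Scope ring_scope.

Set Implicit Arguments. Unset Strict Implicit.
Section Aux.
Variable R : realType.

Definition consf (K : finType) n (k : K) (s : {ffun 'I_n -> K}) : {ffun 'I_n.+1 -> K} :=
  [ffun i : 'I_n.+1 => if unlift ord0 i is Some j then s j else k].
Arguments consf {K n}.

Lemma consf0 (K : finType) n k (s : {ffun 'I_n -> K}) : consf k s ord0 = k.
Proof. by rewrite ffunE unlift_none. Qed.

Lemma consfS (K : finType) n k (s : {ffun 'I_n -> K}) j : consf k s (lift ord0 j) = s j.
Proof. by rewrite ffunE liftK. Qed.

Lemma sum_ffun_recl (K : finType) n (F : {ffun 'I_n.+1 -> K} -> R) :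
  \sum_s F s = \sum_k \sum_(s : {ffun 'I_n -> K}) F (consf k s).
Proof.
rewrite pair_big /=.
rewrite (reindex (fun p : K * {ffun 'I_n -> K} => consf p.1 p.2)) //=.
exists (fun s : {ffun 'I_n.+1 -> K} => (s ord0, [ffun j => s (lift ord0 j)])).
  move=> [k s] _ /=; rewrite consf0; congr pair; apply/ffunP => j.
  by rewrite ffunE consfS.
move=> s _ /=; apply/ffunP => i; rewrite ffunE.
by case: unliftP => [j ->|->] //; rewrite ffunE.
Qed.

Lemma iid_recl (K : finType) (prob : K -> R) n (c : K -> R) (G : R -> R) :
  iid_expect prob (n:=n.+1) (fun s => G (\sum_t c (s t))) =
  \sum_k prob k * iid_expect prob (n:=n) (fun s => G (c k + \sum_t c (s t))).
Proof.
rewrite /iid_expect sum_ffun_recl; apply: eq_bigr => k _.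
rewrite mulr_sumr; apply: eq_bigr => s _.
rewrite big_ord_recl big_ord_recl consf0.
rewrite (eq_bigr (fun i => prob (s i))); last by move=> i _; rewrite consfS.
have -> : \sum_(i<n) c (consf k s (lift ord0 i)) = \sum_t c (s t).
  by apply: eq_bigr => i _; rewrite consfS.
by rewrite mulrA.
Qed.


Lemma iid_lin (K : finType) (prob : K -> R) n f g a b :
  iid_expect prob (n:=n) (fun s => a * f s + b * g s) =
  a * iid_expect prob (n:=n) f + b * iid_expect prob (n:=n) g.
Proof.
rewrite /iid_expect 2!mulr_sumr -big_split; apply: eq_bigr => s _ /=.
ring.
Qed.

Lemma iid_ext (K : finType) (prob : K -> R) n f g :
  (forall s, f s = g s) -> iid_expect prob (n:=n) f = iid_expect prob (n:=n) g.
Proof. by move=> h; rewrite /iid_expect; apply: eq_bigr => s _; rewrite h. Qed.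

Lemma iid_const (K : finType) (prob : K -> R) n a :
  \sum_k prob k = 1 -> iid_expect prob (n:=n) (fun _ => a) = a.
Proof.
move=> h; rewrite /iid_expect -mulr_suml.
rewrite -(bigA_distr_bigA (fun (_ : 'I_n) k => prob k)) /=.
by rewrite h big1 ?mul1r.
Qed.

Lemma iid_le (K : finType) (prob : K -> R) n f g :
  (forall k, 0 <= prob k) ->
  (forall s, f s <= g s) -> iid_expect prob (n:=n) f <= iid_expect prob (n:=n) g.
Proof.
move=> hp h; rewrite /iid_expect; apply: ler_sum => s _.
apply: ler_wpM2l; last exact: h.
by apply: prodr_ge0 => t _.
Qed.


Arguments iid_ext {K prob n f g}.
Lemma iid_aff3 (K : finType) (prob : K -> R) n f g a b c :
  \sum_k prob k = 1 ->
  iid_expect prob (n:=n) (fun s => a + b * f s + c * g s) =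
  a + b * iid_expect prob (n:=n) f + c * iid_expect prob (n:=n) g.
Proof.
move=> h.
rewrite (iid_ext (g := fun s => 1 * (a + b * f s) + c * g s)); last by move=> s; ring.
rewrite iid_lin.
rewrite (iid_ext (g := fun s => a * (fun=> 1) s + b * f s)); last by move=> s; ring.
by rewrite iid_lin iid_const //; ring.
Qed.

Definition pr (b : bool) : R := 1/2.
Definition cc (b : bool) : R := if b then 1/2 else -(1/2).
Definition Ys n (s : {ffun 'I_n -> bool}) : R := \sum_t cc (s t).

Lemma sum_pr : \sum_k pr k = 1.
Proof. rewrite big_bool /pr /=. lra. Qed.

Lemma recur n (G : R -> R) :
  iid_expect pr (n:=n.+1) (fun s => G (Ys s)) =
  1/2 * iid_expect pr (n:=n) (fun s => G (1/2 + Ys s)) +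
  1/2 * iid_expect pr (n:=n) (fun s => G (-(1/2) + Ys s)).
Proof. by rewrite /Ys iid_recl big_bool. Qed.

Lemma E0 (f : {ffun 'I_0 -> bool} -> R) :
  (forall s, f s = 0) -> iid_expect pr f = 0.
Proof. by move=> h; rewrite (iid_ext h) iid_const // sum_pr. Qed.

Lemma M1 n : iid_expect pr (n:=n) (fun s => Ys s) = 0.
Proof.
elim: n => [|n IH]; first by apply: E0 => s; rewrite /Ys big_ord0.
rewrite (recur n id) /= -iid_lin.
rewrite (iid_ext (g := fun s => 0 + 1 * Ys s + 0 * Ys s)); last by move=> s; field.
rewrite iid_aff3 ?sum_pr // IH; by field.
Qed.

Lemma M2 n : iid_expect pr (n:=n) (fun s => Ys s ^+ 2) = n%:R / 4.
Proof.
elim: n => [|n IH]; first by rewrite mul0r; apply: E0 => s; rewrite /Ys big_ord0 expr0n.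
rewrite (recur n (fun y => y ^+ 2)) /= -iid_lin.
rewrite (iid_ext (g := fun s => 1/4 + 0 * Ys s + 1 * Ys s ^+ 2)); last by move=> s; field.
rewrite iid_aff3 ?sum_pr // IH -natr1; by field.
Qed.

Lemma M4 n : iid_expect pr (n:=n) (fun s => Ys s ^+ 4) = (3 * n%:R ^+ 2 - 2 * n%:R) / 16.
Proof.
elim: n => [|n IH]; first by rewrite expr0n /= !mulr0 subr0 mul0r; apply: E0 => s; rewrite /Ys big_ord0 expr0n.
rewrite (recur n (fun y => y ^+ 4)) /= -iid_lin.
rewrite (iid_ext (g := fun s => 1/16 + (3/2) * Ys s ^+ 2 + 1 * Ys s ^+ 4)); last by move=> s; field.
rewrite iid_aff3 ?sum_pr // IH M2 -natr1; by field.
Qed.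


Definition ww (b : bool) : R := if b then 2 else 1.

Lemma ww_pos b : 0 < ww b. Proof. by case: b; rewrite /ww /=; lra. Qed.
Lemma ww_le2 b : ww b <= 2. Proof. by case: b; rewrite /ww /=; lra. Qed.
Lemma ww_cc b : ww b = cc b + 3/2.
Proof. by case: b; rewrite /ww /cc /=; field. Qed.

Lemma Wsum n (s : {ffun 'I_n -> bool}) : \sum_t ww (s t) = Ys s + n%:R * (3/2).
Proof.
rewrite /Ys (eq_bigr (fun t => cc (s t) + 3/2)); last by move=> t _; rewrite ww_cc.
rewrite big_split /= sumr_const card_ord; congr (_ + _); exact: (esym (mulr_natl _ _)).
Qed.

Lemma Wpos n (s : {ffun 'I_n -> bool}) : (0 < n)%N -> 0 < \sum_t ww (s t).
Proof.
case: n s => // n s _; rewrite big_ord_recl; apply: ltr_pwDl; first exact: ww_pos.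
by apply: sumr_ge0 => t _; apply/ltW/ww_pos.
Qed.

Lemma ln_le_sub1 (z : R) : 0 < z -> ln z <= z - 1.
Proof.
move=> hz; have := @le_ln1Dx R (z - 1); rewrite addrCA subrr addr0; apply; lra.
Qed.

Lemma ln_ge_1V (z : R) : 0 < z -> 1 - z^-1 <= ln z.
Proof.
move=> hz; have hz1 : 0 < z^-1 by rewrite invr_gt0.
have := @ln_le_sub1 (z^-1) hz1.
rewrite lnV ?posrE //; lra.
Qed.

Lemma ob1 (p : 'I_1 -> R) (wk : R) (x : 'I_1 -> R) : 0 < wk ->
  optimal_bundle p wk (fun _ => 1) x -> 0 < p ord0 /\ x ord0 = wk / p ord0.
Proof.
move=> hw [hx [hb hopt]]; rewrite big_ord1 in hb.
have hpos : 0 < p ord0.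
  rewrite ltNge; apply/negP => hp.
  have := hopt (fun _ => x ord0 + 1); rewrite !big_ord1 !mul1r.
  have h0 := hx ord0.
  have -> : p ord0 * (x ord0 + 1) <= wk by rewrite mulrDr mulr1; lra.
  move=> /(_ (fun _ => ltW (ltr_pwDr ltr01 h0)) isT); lra.
split => //.
have h1 := hopt (fun _ => wk / p ord0); rewrite !big_ord1 !mul1r in h1.
have h2 : wk / p ord0 <= x ord0.
  apply: h1 => [j|]; first by apply: divr_ge0; apply: ltW.
  by rewrite mulrC divfK ?gt_eqF.
apply/eqP; rewrite eq_le h2 andbT ler_pdivlMr // mulrC.
exact: hb.
Qed.


Lemma EG_lb n (s : {ffun 'I_n -> bool}) : (0 < n)%N ->
  \sum_t ww (s t) * ln (n%:R * ww (s t) / \sum_t' ww (s t')) <=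
  EG_opt (fun _ : 'I_1 => 1) (fun t => ww (s t)) (fun _ _ => 1).
Proof.
move=> hn; set W := \sum_t' ww (s t').
have hW : 0 < W := Wpos s hn.
have hn0 : (0 : R) < n%:R by rewrite ltr0n.
rewrite /EG_opt; set S := (X in sup X).
have hS : S (\sum_t ww (s t) * ln (n%:R * ww (s t) / W)).
  exists (fun t _ => n%:R * ww (s t) / W); split; [|split; [|split]].
  - move=> t j; apply: divr_ge0; last exact: ltW.
    by apply: mulr_ge0; [exact: ltW | exact/ltW/ww_pos].
  - move=> j; rewrite mulr1 -mulr_suml -mulr_sumr -/W mulfK ?gt_eqF //.
  - move=> t; rewrite big_ord1 mul1r; apply: divr_gt0 => //.
    by apply: mulr_gt0 => //; exact: ww_pos.
  - by apply: eq_bigr => t _; rewrite big_ord1 mul1r.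
apply: sup_upper_bound => //; split; first by eexists; exact: hS.
exists (2 * n%:R) => v [X [hX [hc [hp ->]]]].
apply: (@le_trans _ _ (\sum_t 2 * X t ord0)).
  apply: ler_sum => t _; have := hp t; rewrite big_ord1 mul1r => hz.
  have h1 := ln_le_sub1 hz.
  have h2 := ww_pos (s t); have h3 := ww_le2 (s t).
  apply: (@le_trans _ _ (ww (s t) * X t ord0)).
    by apply: ler_wpM2l; [exact: ltW | lra].
  by apply: ler_wpM2r; [exact: ltW | done].
rewrite -mulr_sumr; apply: ler_wpM2l; first lra.
by have := hc ord0; rewrite mulr1.
Qed.


Lemma reg_lb n P (xn : 'I_n -> bool -> 'I_1 -> R) : (0 < n)%N -> 0 < P ->
  (forall t k, xn t k ord0 = ww k / P) ->
  n%:R * (3/2) - (n%:R * (3/2))^+2 / (n%:R * P) - n%:R / (4 * (n%:R * P))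
   <= exp_regret (fun _ : 'I_1 => 1) pr ww (fun _ _ => 1) xn.
Proof.
move=> hn hP hx; rewrite /exp_regret.
have hn0 : (0 : R) < n%:R by rewrite ltr0n.
set q := n%:R * P; set mu := n%:R * (3/2).
have hq : 0 < q by apply: mulr_gt0.
have -> : mu - mu ^+ 2 / q - n%:R / (4 * q) =
   iid_expect pr (fun s : {ffun 'I_n -> bool} =>
     (mu - mu^+2 / q) + (1 - 2 * mu / q) * Ys s + (- q^-1) * Ys s ^+ 2).
  rewrite iid_aff3 ?sum_pr // M1 M2; by field; rewrite gt_eqF.
apply: iid_le => [k|s]; first by rewrite /pr; lra.
set W := \sum_t ww (s t).
have hW : 0 < W := Wpos s hn.
have -> : (mu - mu ^+ 2 / q) + (1 - 2 * mu / q) * Ys s + - q^-1 * Ys s ^+ 2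
   = W * (1 - W / q).
  rewrite /W Wsum -/mu; field; lra.
apply: le_trans (lerB (EG_lb s hn) (lexx _)).
rewrite -/W -sumrB mulr_suml; apply: ler_sum => t _.
rewrite big_ord1 mul1r hx -mulrBr.
have hwt := ww_pos (s t).
apply: ler_wpM2l; first exact: ltW.
rewrite -ln_div; first last.
- by rewrite posrE; apply: divr_gt0.
- by rewrite posrE; apply: divr_gt0 => //; apply: mulr_gt0.
have -> : n%:R * ww (s t) / W / (ww (s t) / P) = q / W.
  rewrite /q; field; rewrite !gt_eqF //.
have := ln_ge_1V (divr_gt0 hq hW); rewrite invf_div //.
Qed.

Lemma pw (sq y : R) : 0 < sq -> y ^+ 2 <= sq * `|y| + y ^+ 4 / sq ^+ 2.
Proof.
move=> hs.
have ha : 0 <= `|y| := normr_ge0 y.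
have e2 : y ^+ 2 = `|y| ^+ 2 by rewrite real_normK ?num_real.
have e4 : y ^+ 4 = (`|y| ^+ 2) ^+ 2 by rewrite -e2 -exprM.
rewrite e4 e2; move: ha; set a := `|y| => ha.
have hs2 : 0 < sq ^+ 2 by rewrite exprn_gt0.
rewrite -(ler_pM2r hs2) mulrDl divfK ?gt_eqF //.
case: (lerP a sq) => h.
  have : a ^+ 2 * sq ^+ 2 <= sq * a * sq ^+ 2.
    by apply: ler_wpM2r; [exact: ltW | rewrite expr2 ler_wpM2r].
  have : 0 <= (a ^+ 2) ^+ 2 by rewrite exprn_ge0 // exprn_ge0.
  lra.
have : a ^+ 2 * sq ^+ 2 <= (a ^+ 2) ^+ 2.
  rewrite [X in _ <= X]expr2; apply: ler_wpM2l; first by rewrite exprn_ge0.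
  by rewrite ler_pXn2r // ?nnegrE ltW // (lt_trans hs h).
have : 0 <= sq * a * sq ^+ 2 by rewrite mulr_ge0 // mulr_ge0 // ltW.
lra.
Qed.

Lemma Eabs n : (0 < n)%N ->
  Num.sqrt n%:R / 16 <= iid_expect pr (fun s : {ffun 'I_n -> bool} => `|Ys s|).
Proof.
move=> hn; set sq := Num.sqrt n%:R.
have hsq : 0 < sq by rewrite sqrtr_gt0 ltr0n.
have hsq2 : sq ^+ 2 = n%:R by rewrite sqr_sqrtr // ler0n.
have H : iid_expect pr (fun s : {ffun 'I_n -> bool} => Ys s ^+ 2) <=
   iid_expect pr (fun s : {ffun 'I_n -> bool} => 0 + sq * `|Ys s| + (sq ^+ 2)^-1 * Ys s ^+ 4).
  apply: iid_le => [k|s]; first by rewrite /pr; lra.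
  by rewrite add0r [_^-1 * _]mulrC; apply: pw.
rewrite iid_aff3 ?sum_pr // M2 M4 hsq2 in H.
have hn0 : (0 : R) < n%:R by rewrite ltr0n.
have e : (n%:R)^-1 * ((3 * n%:R ^+ 2 - 2 * n%:R) / 16) = (3 * n%:R - 2) / 16 :> R.
  by field; rewrite gt_eqF.
rewrite e in H.
move: H; set E := iid_expect _ _ => H.
rewrite -(ler_pM2l hsq); rewrite -hsq2 in H.
have : sq * (sq / 16) = sq ^+ 2 / 16 by rewrite expr2 mulrA.
lra.
Qed.

Lemma viol_lb n P (xn : 'I_n -> bool -> 'I_1 -> R) b : (0 < n)%N -> 0 < P ->
  (forall t k, xn t k ord0 = ww k / P) -> 0 <= b ->
  n%:R * P - n%:R * (3/2) <= b ->
  (iid_expect pr (fun s : {ffun 'I_n -> bool} => `|Ys s|) / 2 - b) / P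
   <= exp_violation (fun _ : 'I_1 => 1) pr xn.
Proof.
move=> hn hP hx hb hd; rewrite /exp_violation.
have -> : (iid_expect pr (fun s : {ffun 'I_n -> bool} => `|Ys s|) / 2 - b) / P =
   iid_expect pr (fun s : {ffun 'I_n -> bool} =>
     (- b / P) + (2 * P)^-1 * `|Ys s| + (2 * P)^-1 * Ys s).
  rewrite iid_aff3 ?sum_pr // M1; field; rewrite gt_eqF //.
apply: iid_le => [k|s]; first by rewrite /pr; lra.
rewrite big_ord1 sqrtr_sqr.
have -> : \sum_t xn t (s t) ord0 = (Ys s + n%:R * (3/2)) / P.
  rewrite -Wsum mulr_suml; apply: eq_bigr => t _; exact: hx.
set z := _ - _ * 1.
have hz : (Ys s - b) / P <= z.
  rewrite /z mulr1 ler_pdivrMr // mulrBl divfK ?gt_eqF //; lra.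
have hm : 0 <= Num.max 0 z by rewrite le_max lexx.
rewrite (ger0_norm hm).
have hzm : z <= Num.max 0 z by rewrite le_max lexx orbT.
have hPi : 0 < P^-1 by rewrite invr_gt0.
case: (lerP 0 (Ys s)) => hy.
  rewrite ger0_norm //.
  have -> : - b / P + (2 * P)^-1 * Ys s + (2 * P)^-1 * Ys s = (Ys s - b) / P.
    by field; rewrite gt_eqF.
  exact: le_trans hz hzm.
rewrite ltr0_norm //.
have -> : - b / P + (2 * P)^-1 * - Ys s + (2 * P)^-1 * Ys s = - (b * P^-1).
  by field; rewrite gt_eqF.
apply: le_trans hm; rewrite oppr_le0; exact: mulr_ge0 hb (ltW hPi).
Qed.

Lemma final (N sq P E : R) : 64 <= sq -> sq ^+ 2 = N -> 0 < P -> sq / 16 <= E ->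
  (N * P - N * (3/2) <= sq / 64 -> 1/256 * sq <= (E / 2 - sq / 64) / P) /\
  (sq / 64 < N * P - N * (3/2) ->
    1/256 * sq <= N * (3/2) - (N * (3/2)) ^+ 2 / (N * P) - N / (4 * (N * P))).
Proof.
move=> hs hN hP hE.
have hsN : 64 * sq <= N by rewrite -hN expr2 ler_wpM2r //; lra.
have hN0 : 0 < N by lra.
split => hd.
  have hP2 : P <= 2.
    rewrite leNgt; apply/negP => hP2.
    have : N * 2 < N * P by rewrite ltr_pM2l.
    lra.
  rewrite ler_pdivlMr //.
  have : 1/256 * sq * P <= 1/256 * sq * 2 by rewrite ler_wpM2l //; lra.
  lra.
move: hd; set q := N * P; set mu := N * (3/2) => hd.
have hq : 0 < q by apply: mulr_gt0.
have -> : mu - mu ^+ 2 / q - N / (4 * q) = (mu * (q - mu) - N / 4) / q.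
  by field; rewrite gt_eqF.
have hmu : 0 <= mu by rewrite /mu; lra.
rewrite ler_pdivlMr //.
case: (lerP q (3 * N)) => hq3.
  have h1 : sq * q <= sq * (3 * N) by rewrite ler_wpM2l //; lra.
  have h2 : mu * (sq / 64) <= mu * (q - mu) by rewrite ler_wpM2l //; lra.
  have h3 : 64 * N <= sq * N by rewrite ler_wpM2r //; lra.
  have e : mu = N * (3/2) by []. rewrite e in h2 *; lra.
have h1 : mu * (q / 2) <= mu * (q - mu) by rewrite ler_wpM2l // /mu; lra.
have h2 : sq * q <= N * q by rewrite ler_wpM2r //; lra.
have h3 : N * 1 <= N * q by rewrite ler_wpM2l //; lra.
have e : mu = N * (3/2) by []. rewrite e in h1 *; lra.
Qed.

End Aux.

Theorem theorem1 (R : realType) :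
  exists (m : nat) (d : 'I_m -> R) (K : finType) (prob : K -> R)
         (w : K -> R) (u : K -> 'I_m -> R),
    (forall j, 0 < d j) /\
    (forall k, 0 < prob k) /\ \sum_k prob k = 1 /\
    (forall k, 0 < w k) /\ (forall k j, 0 <= u k j) /\
    (forall k, exists j, 0 < u k j) /\
    forall (p : nat -> 'I_m -> R)
           (x : forall n : nat, 'I_n -> K -> 'I_m -> R),
      (forall n (t : 'I_n) k, optimal_bundle (p n) (w k) (u k) (x n t k)) ->
      exists C : R, 0 < C /\ exists N : nat, forall n : nat, (N <= n)%N ->
        C * Num.sqrt (n%:R) <= exp_regret d prob w u (x n) \/
        C * Num.sqrt (n%:R) <= exp_violation d prob (x n).
Proof.
exists 1%N, (fun _ => 1), bool, (@pr R), (@ww R), (fun _ _ => 1).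
split; first by move=> j; lra.
split; first by move=> k; rewrite /pr; lra.
split; first exact: sum_pr.
split; first exact: ww_pos.
split; first by move=> k j; lra.
split; first by move=> k; exists ord0; lra.
move=> p x hopt.
exists (1/256); split; first lra.
exists 4096%N => n hn.
have hn0 : (0 < n)%N by apply: leq_trans hn.
have [hP _] := ob1 (@ww_pos R true) (hopt n (Ordinal hn0) true).
have hx : forall t k, x n t k ord0 = ww R k / p n ord0.
  by move=> t k; have [_ ->] := ob1 (@ww_pos R k) (hopt n t k).
set P := p n ord0 in hP hx *.
set sq := Num.sqrt n%:R.
have hs : 64 <= sq.
  have : Num.sqrt (64 ^+ 2) <= sq :> R.
    rewrite /sq ler_sqrt ?ler0n //.
    by rewrite -natrX ler_nat.
  by rewrite sqrtr_sqr ger0_norm.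
have hsq2 : sq ^+ 2 = n%:R by rewrite sqr_sqrtr // ler0n.
have hE := @Eabs R n hn0.
have [f1 f2] := final hs hsq2 hP hE.
case: (lerP (n%:R * P - n%:R * (3/2)) (sq / 64)) => hd.
  right; apply: le_trans (f1 hd) _.
  apply: viol_lb => //; apply: divr_ge0; lra.
left; apply: le_trans (f2 hd) _.
exact: reg_lb.
Qed.
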